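(* Let $q$ be a prime power and $v,r\ge 1$ integers. If the generalized cylinder conjecture is true for $(v+1,r+1,q)$, then it is true for $(v,r,q)$.
   Context: $\mathrm{PG}(v-1,q)$ is the projective space of $\mathbb{F}_q^v$; a $k$-space is a $k$-dimensional subspace of $\mathbb{F}_q^v$ (points are $1$-spaces, hyperplanes $(v-1)$-spaces). A set $\mathcal{S}$ of points is spanning if its points span $\mathbb{F}_q^v$, and it is $q^r$-divisible if $|\mathcal{S}\cap H|\equiv|\mathcal{S}|\pmod{q^r}$ for every hyperplane $H$. An $(r+1)$-cylinder is a multiset of $q^{r+1}$ points which arises as the union (counted with multiplicity) of the point sets $L_1\setminus F,\dots,L_q\setminus F$, where $L_1,\dots,L_q$ are $(r+1)$-spaces and $F$ is an $r$-space contained in every $L_i$ ($L_i\setminus F$ denotes the set of points of $L_i$ not in $F$). The generalized cylinder conjecture is said to be true for the triple $(v,r,q)$ if every $q^r$-divisible spanning set of $q^{r+1}$ points in $\mathrm{PG}(v-1,q)$ is an $(r+1)$-cylinder. *)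

(* Defs.v *)
(* projective geometry PG(v-1,q) over a finite field F with
   q = #|F|, subspaces of F^v represented by row spaces of square matrices. *)
From HB Require Import structures.
From mathcomp Require Import all_boot all_order all_algebra all_fingroup all_field.
Set Implicit Arguments. Unset Strict Implicit. Unset Printing Implicit Defensive.
Import GRing.Theory.
Local Open Scope ring_scope.

Section PG.
Variable F : finFieldType.

(* Points of PG(v-1, q): 1-dimensional subspaces of F^v, each represented by
   its canonical generating matrix <<A>> (so equality of points = equality of
   subspaces). *)
Definition is_point (v : nat) (A : 'M[F]_v) : bool :=
  (\rank A == 1%N) && (<<A>>%MS == A).

Definition point (v : nat) := {A : 'M[F]_v | is_point A}.

Definition incident (v : nat) (P : point v) (X : 'M[F]_v) : bool :=
  (val P <= X)%MS.

Definition spanning (v : nat) (S : {set point v}) : Prop :=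
  (1%:M <= \sum_(P in S) val P)%MS.

Definition divisible (v r : nat) (S : {set point v}) : Prop :=
  forall H : 'M[F]_v, \rank H = (v - 1)%N ->
    #|[set P in S | incident P H]| = #|S| %[mod #|F| ^ r].

(* S (as a multiset with multiplicities 0/1) is an (r+1)-cylinder:
   there are an r-space Fs and (r+1)-spaces L_1..L_q containing Fs such that
   the multiplicity of every point P in S equals the number of i with
   P in L_i \ Fs. *)
Definition cylinder (v r : nat) (S : {set point v}) : Prop :=
  exists (Fs : 'M[F]_v) (L : 'I_#|F| -> 'M[F]_v),
    [/\ \rank Fs = r,
        forall i, \rank (L i) = r.+1 /\ (Fs <= L i)%MS &
        forall P : point v,
          nat_of_bool (P \in S) =
          (\sum_(i < #|F|) ((incident P (L i)) && ~~ incident P Fs))%N].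

Definition GCC (v r : nat) : Prop :=
  forall S : {set point v},
    spanning S -> divisible r S -> #|S| = (#|F| ^ r.+1)%N -> cylinder r S.

End PG.

(* Main.v *)
Require Import Defs.
From mathcomp Require Import all_boot all_order all_algebra all_fingroup all_field.
Set Implicit Arguments. Unset Strict Implicit. Unset Printing Implicit Defensive.
From mathcomp Require Import zify.
From Stdlib Require Import Lia.
Import GRing.Theory.
Local Open Scope ring_scope.

Section Aux.
Variable F : finFieldType.

Definition rep n (P : point F n) : 'rV[F]_n := nz_row (val P).

Lemma rep_neq0 n (P : point F n) : rep P != 0.
Proof.
rewrite /rep nz_row_eq0 -mxrank_eq0.
by case: P => A /= /andP[/eqP -> _].
Qed.

Lemma rep_val n (P : point F n) : val P = <<rep P>>%MS.
Proof.
case: P => A hA /=; have /andP[/eqP rA /eqP gA] := hA.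
have sub := nz_row_sub A.
have : (\rank (nz_row A) == \rank A) = (nz_row A == A)%MS.
  exact: (mxrank_leqif_eq sub).2.
rewrite rA rank_rV nz_row_eq0 -mxrank_eq0 rA /= => /esym/genmxP e.
by rewrite /rep /= e gA.
Qed.

Lemma incidentE n (P : point F n) (X : 'M[F]_n) :
  incident P X = (rep P <= X)%MS.
Proof. by rewrite /incident rep_val genmxE. Qed.

Lemma pt_eq n (P Q : point F n) : (rep P <= rep Q)%MS -> P = Q.
Proof.
move=> s; apply: val_inj; rewrite !rep_val; apply/genmxP.
have := (mxrank_leqif_eq s).2; rewrite !rank_rV !rep_neq0 /=.
by move/esym.
Qed.

Lemma is_point_gen n (u : 'rV[F]_n) : u != 0 -> is_point <<u>>%MS.
Proof.
move=> u0; rewrite /is_point genmx_id eqxx andbT genmxE rank_rV u0.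
by [].
Qed.


Variable v : nat.

Definition e : 'rV[F]_(1+v) := row_mx 1 0.

Lemma row_mx_neq0r (a : 'rV[F]_1) (x : 'rV[F]_v) : x != 0 -> row_mx a x != 0.
Proof.
apply: contra => /eqP h; have := congr1 rsubmx h.
by rewrite row_mxKr linear0 => ->.
Qed.

Lemma e_neq0 : e != 0.
Proof.
apply/eqP => h; have := congr1 lsubmx h; rewrite row_mxKl linear0.
by move/eqP; rewrite oner_eq0.
Qed.

Definition pe : point F (1+v) := exist _ <<e>>%MS (is_point_gen e_neq0).
Definition ptof (u : 'rV[F]_(1+v)) : point F (1+v) := insubd pe <<u>>%MS.

Lemma ptof_val u : u != 0 -> val (ptof u) = <<u>>%MS.
Proof. by move=> u0; rewrite val_insubd is_point_gen. Qed.

Lemma incident_ptof u X : u != 0 -> incident (ptof u) X = (u <= X)%MS.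
Proof. by move=> u0; rewrite /incident ptof_val // genmxE. Qed.

Lemma ptof_eq u w : u != 0 -> w != 0 -> ptof u = ptof w -> exists k, u = k *: w.
Proof.
move=> u0 w0 /(congr1 val); rewrite !ptof_val // => /genmxP/andP[s _].
exact/sub_rVP.
Qed.

Definition fpt (p : point F v * F) : point F (1+v) :=
  ptof (row_mx p.2%:M (rep p.1)).

Lemma fpt_inj : injective fpt.
Proof.
move=> [P a] [Q b]; rewrite /fpt /=.
move/ptof_eq; rewrite !row_mx_neq0r ?rep_neq0 // => /(_ isT isT) [k].
rewrite scale_row_mx => /eq_row_mx [ha hr].
have k0 : k != 0.
  apply: contraNneq (rep_neq0 P) => k0; by rewrite hr k0 scale0r.
have PQ : P = Q.
  by apply: pt_eq; apply/sub_rVP; exists k.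
subst Q.
have k1 : k = 1.
  apply/eqP; rewrite -subr_eq0; apply/eqP.
  have : (k - 1) *: rep P = 0 by rewrite scalerBl -hr scale1r subrr.
  by move/eqP; rewrite scaler_eq0 (negPf (rep_neq0 P)) orbF => /eqP.
rewrite k1 scale1r in ha.
have : a = b.
  by have := congr1 (fun M : 'M[F]_1 => M 0 0) ha; rewrite /= !mxE /=.
by move->.
Qed.


Definition Phi (g : 'cV[F]_v) : 'M[F]_(v, 1+v) := row_mx g 1%:M.
Definition pre g (X : 'M[F]_(1+v)) : 'M[F]_v := kermx (Phi g *m cokermx X).

Lemma pre_sub g m (B : 'M[F]_(m, v)) X : (B <= pre g X)%MS = (B *m Phi g <= X)%MS.
Proof. by rewrite sub_kermx submxE mulmxA. Qed.

Lemma Phi_rank g : \rank (Phi g) = v.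
Proof.
apply/eqP; rewrite eqn_leq rank_leq_row /=.
have : Phi g *m col_mx 0 1%:M = 1%:M by rewrite mul_row_col mulmx0 add0r mulmx1.
move=> h; have := mxrankM_maxl (Phi g) (col_mx 0 1%:M).
by rewrite h mxrank1.
Qed.

Lemma Phi_free g : row_free (Phi g).
Proof. by rewrite /row_free Phi_rank. Qed.

Lemma sub_Phi g (w : 'rV[F]_(1+v)) : (w <= Phi g)%MS -> lsubmx w = rsubmx w *m g.
Proof.
case/submxP => D ->; rewrite /Phi mul_mx_row row_mxKl row_mxKr.
by rewrite mulmx1.
Qed.

Lemma e_notin g : ~~ (e <= Phi g)%MS.
Proof.
apply/negP => /sub_Phi; rewrite /e row_mxKl row_mxKr mul0mx.
by move/eqP; rewrite oner_eq0.
Qed.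

Lemma pre_rank g X : ~~ (X <= Phi g)%MS -> \rank (pre g X) = (\rank X).-1.
Proof.
move=> nX.
have eq1 : (pre g X *m Phi g == Phi g :&: X)%MS.
  apply/andP; split.
    by rewrite sub_capmx submxMl -pre_sub submx_refl.
  have /submxP [D hD] := capmxSl (Phi g) X.
  rewrite hD submxMr // pre_sub -hD.
  exact: capmxSr.
have r1 : \rank (pre g X) = \rank (Phi g :&: X).
  by rewrite -(mxrankMfree _ (Phi_free g)); apply/eqmx_rank.
have hs := mxrank_sum_cap (Phi g) X.
have r2 : \rank (Phi g + X)%MS = (1 + v)%N.
  apply/eqP; rewrite eqn_leq rank_leq_col /=.
  have := (mxrank_leqif_sup (addsmxSl (Phi g) X)).2.
  have -> : (Phi g + X <= Phi g)%MS = false.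
    apply/negbTE; apply: contra nX => h.
    exact: submx_trans (addsmxSr _ _) h.
  rewrite Phi_rank => h.
  have := mxrankS (addsmxSl (Phi g) X); rewrite Phi_rank leq_eqVlt h /=.
  by [].
rewrite r1; move: hs; rewrite r2 Phi_rank.
case: (\rank X) => [|k] /=; lia.
Qed.


Variable S : {set point F v}.

Definition Slift : {set point F (1+v)} := fpt @: setX S [set: F].

Lemma card_lift (h : pred (point F (1+v))) :
  #|[set Q in Slift | h Q]| = (\sum_(P in S) #|[set a : F | h (fpt (P, a))]|)%N.
Proof.
have -> : [set Q in Slift | h Q] = fpt @: [set p in setX S setT | h (fpt p)].
  apply/setP => Q; rewrite inE; apply/andP/imsetP.
  - case=> /imsetP[p pin ->] hq; exists p => //; by rewrite inE pin.
  - case=> p; rewrite inE => /andP[pin hp] ->; split => //; exact: imset_f.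
rewrite card_imset; last exact: fpt_inj.
rewrite -sum1_card.
rewrite (eq_bigl (fun p => (p.1 \in S) && h (fpt (p.1, p.2)))); last first.
  by case=> P a; rewrite !inE andbT.
rewrite -(pair_big_dep (fun P => P \in S) (fun P a => h (fpt (P,a))) (fun _ _ => 1%N)).
apply: eq_bigr => P _; rewrite -sum1_card; apply: eq_bigl => a; by rewrite inE.
Qed.

Lemma card_Slift : #|Slift| = (#|S| * #|F|)%N.
Proof. by rewrite card_imset ?cardsX ?cardsT //; exact: fpt_inj. Qed.


Lemma scalar0_1 : (0 : F)%:M = 0 :> 'M[F]_1.
Proof. by apply/matrixP => i j; rewrite !mxE mul0rn. Qed.

Lemma mulPhi0 (x : 'rV[F]_v) : x *m Phi 0 = row_mx 0 x.
Proof. by rewrite /Phi mul_mx_row mulmx0 mulmx1. Qed.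

Lemma lift_decomp (w : 'rV[F]_(1+v)) :
  w = (lsubmx w 0 0) *: e + rsubmx w *m Phi 0.
Proof.
rewrite mulPhi0 /e scale_row_mx scaler0 add_row_mx addr0 add0r.
by rewrite scalemx1 -mx11_scalar hsubmxK.
Qed.

Lemma fpt_val P a : val (fpt (P, a)) = <<row_mx a%:M (rep P)>>%MS.
Proof. by rewrite /fpt ptof_val // row_mx_neq0r // rep_neq0. Qed.

Lemma spanning_lift : spanning S -> S != set0 -> spanning Slift.
Proof.
move=> hsp /set0Pn [P0 P0S].
rewrite /spanning.
set Sg := (\sum_(Q in Slift) val Q)%MS.
have memS : forall P a, P \in S -> (row_mx a%:M (rep P) <= Sg)%MS.
  move=> P a PS; apply: (sumsmx_sup (fpt (P, a))).
    by apply: imset_f; rewrite inE PS inE.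
  by rewrite fpt_val genmxE.
have eS : (e <= Sg)%MS.
  have -> : e = row_mx (1 : F)%:M (rep P0) - row_mx (0 : F)%:M (rep P0).
    by rewrite opp_row_mx add_row_mx subrr scalar0_1 oppr0 addr0.
  by rewrite addmx_sub ?memS // eqmx_opp memS.
have embS : forall x : 'rV[F]_v, (x *m Phi 0 <= Sg)%MS.
  move=> x; rewrite -pre_sub.
  apply: submx_trans (submx1 x) _; apply: submx_trans hsp _.
  apply/sumsmx_subP => P PS; rewrite pre_sub rep_val.
  rewrite (eqmxMr _ (genmxE _)) mulPhi0 -scalar0_1.
  exact: memS.
apply/row_subP => i.
rewrite (lift_decomp (row i 1%:M)).
by rewrite addmx_sub ?scalemx_sub.
Qed.


Lemma sum_indicator (T : finType) (A : {set T}) (b : pred T) (c : nat) :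
  (\sum_(x in A) (if b x then c else 0))%N = (#|[set x in A | b x]| * c)%N.
Proof.
rewrite -sum_nat_const big_mkcond /= [RHS]big_mkcond /=.
by apply: eq_bigr => x _; rewrite inE; case: (x \in A); case: (b x).
Qed.

Lemma row_mx_e (a : F) (r : 'rV[F]_v) : row_mx a%:M r = a *: e + r *m Phi 0.
Proof.
by rewrite mulPhi0 /e scale_row_mx scalemx1 scaler0 add_row_mx addr0 add0r.
Qed.

Lemma incident_fpt P a X : incident (fpt (P, a)) X = (row_mx a%:M (rep P) <= X)%MS.
Proof. by rewrite /incident fpt_val genmxE. Qed.

Lemma divisible_lift r : divisible r S -> #|S| = (#|F| ^ r.+1)%N ->
  divisible r.+1 Slift.
Proof.
move=> hdiv hcard H rH.
rewrite card_lift card_Slift.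
have rH' : \rank H = v by rewrite rH; lia.
case eH : (e <= H)%MS.
  have nH : ~~ (H <= Phi 0)%MS.
    by apply: contra (e_notin 0) => h; exact: submx_trans eH h.
  have step : forall P, #|[set a : F | incident (fpt (P, a)) H]| =
      (if incident P (pre 0 H) then #|F| else 0)%N.
    move=> P.
    have -> : [set a : F | incident (fpt (P, a)) H] =
        if incident P (pre 0 H) then setT else set0.
      apply/setP => a; rewrite [in LHS]inE incident_fpt incidentE pre_sub row_mx_e.
      case: (rep P *m Phi 0 <= H)%MS / idP => h.
        by rewrite inE addmx_sub ?scalemx_sub // inE.
      rewrite !inE; apply/negP => h2; apply: h.
      have -> : rep P *m Phi 0 = (a *: e + rep P *m Phi 0) - a *: e.
        by rewrite addrC addKr.
      by rewrite addmx_sub // eqmx_opp scalemx_sub.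
    by case: ifP; rewrite ?cardsT ?cards0.
  rewrite (eq_bigr _ (fun P _ => step P)) sum_indicator.
  rewrite expnSr -!muln_modl hdiv //.
  by rewrite pre_rank // rH'; lia.
pose K := cokermx H.
have rK : \rank K = 1%N by rewrite mxrank_coker rH'; lia.
have eK0 : e *m K != 0 by rewrite -submxE eH.
have KeK : (K <= e *m K)%MS.
  have := (mxrank_leqif_sup (submxMl e K)).2.
  by rewrite rank_rV eK0 rK eqxx => /esym.
have step : forall P, #|[set a : F | incident (fpt (P, a)) H]| = 1%N.
  move=> P.
  have /sub_rVP [mu hmu] : (rep P *m Phi 0 *m K <= e *m K)%MS.
    exact: submx_trans (submxMl _ _) KeK.
  have -> : [set a : F | incident (fpt (P, a)) H] = [set - mu].
    apply/setP => a; rewrite !inE incident_fpt row_mx_e submxE.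
    rewrite mulmxDl -scalemxAl hmu -scalerDl scaler_eq0 (negPf eK0) orbF.
    by rewrite addr_eq0.
  by rewrite cards1.
rewrite (eq_bigr _ (fun P _ => step P)) sum_nat_const muln1 hcard.
by rewrite modnn modnMr.
Qed.


Lemma exists_g (w : 'rV[F]_(1+v)) : w != 0 -> exists g, ~~ (w <= Phi g)%MS.
Proof.
move=> w0.
case: (lsubmx w =P 0) => hl; last first.
  exists 0; apply/negP => /sub_Phi; rewrite mulmx0; exact: hl.
have hr : rsubmx w != 0.
  apply: contraNneq w0 => hr; by rewrite -(hsubmxK w) hl hr row_mx0.
have /existsP [j hj] : [exists j, rsubmx w 0 j != 0].
  apply: contraNT hr => /existsPn h; apply/eqP/matrixP => i j.
  by rewrite ord1 [RHS]mxE; have := h j; rewrite negbK => /eqP.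
exists (delta_mx j 0); apply/negP => /sub_Phi; rewrite hl -colE.
move/(congr1 (fun M : 'M[F]_1 => M 0 0)); rewrite [in RHS]mxE => h.
by move: hj; rewrite -h mxE eqxx.
Qed.

Lemma lift_mem g (P : point F v) :
  (ptof (rep P *m Phi g) \in Slift) = (P \in S).
Proof.
have -> : ptof (rep P *m Phi g) = fpt (P, (rep P *m g) 0 0).
  by rewrite /fpt /Phi mul_mx_row mulmx1 -mx11_scalar.
apply/imsetP/idP.
  case=> [[P' a]]; rewrite inE /= => /andP[P'S _] /fpt_inj [-> _].
  exact: P'S.
by move=> PS; exists (P, (rep P *m g) 0 0) => //; rewrite inE PS inE.
Qed.

Lemma incident_pre g (P : point F v) X :
  incident P (pre g X) = incident (ptof (rep P *m Phi g)) X.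
Proof.
rewrite incidentE pre_sub incident_ptof //.
by rewrite /Phi mul_mx_row mulmx1 row_mx_neq0r // rep_neq0.
Qed.

Lemma cylinder_descend r : cylinder r.+1 Slift -> cylinder r S.
Proof.
case=> Fs' [L' [rF hL hm]].
have Fs0 : nz_row Fs' != 0.
  by rewrite nz_row_eq0 -mxrank_eq0 rF.
have [g hg] := exists_g Fs0.
have nF : ~~ (Fs' <= Phi g)%MS.
  by apply: contra hg => h; exact: submx_trans (nz_row_sub _) h.
exists (pre g Fs'), (fun i => pre g (L' i)); split.
- by rewrite pre_rank // rF.
- move=> i; have [rL sL] := hL i; split.
    rewrite pre_rank ?rL //.
    by apply: contra nF => h; exact: submx_trans sL h.
  rewrite pre_sub; apply: submx_trans sL.
  by rewrite -pre_sub submx_refl.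
- move=> P; rewrite -(lift_mem g) hm.
  by apply: eq_bigr => i _; rewrite !incident_pre.
Qed.

End Aux.

Theorem mainTheorem6 (F : finFieldType) (v r : nat) :
  (1 <= v)%N -> (1 <= r)%N -> GCC F v.+1 r.+1 -> GCC F v r.
Proof.
move=> _ _ hG S hsp hdiv hcard.
apply: (cylinder_descend (S:=S)).
have q0 : (0 < #|F|)%N by apply/card_gt0P; exists 0.
have hc := hG (Slift S).
apply: hc.
- apply: spanning_lift => //.
  by rewrite -card_gt0 hcard expn_gt0 q0.
- exact: divisible_lift.
- by rewrite card_Slift hcard -expnSr.
Qed.
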